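(* Let $n\ge 1$, $P\ge 0$ and $\mathbf{h}\in\mathbb{R}^n$, and let $$\mathbf{G}=(1+P\|\mathbf{h}\|^2)\mathbf{I}-P\mathbf{h}\mathbf{h}^T .$$ Let $\mathbf{a}^*$ be any minimizer of $f(\mathbf{a})=\mathbf{a}^T\mathbf{G}\mathbf{a}$ over $\mathbf{a}\in\mathbb{Z}^n\setminus\{\mathbf{0}\}$. Then either $\mathbf{a}^*=\pm\mathbf{u}_i$ for some $i$, or there exists $x\in\mathbb{R}$ such that, elementwise, $$\mathbf{a}^*-\tfrac12\mathbf{1}<\mathbf{h}x<\mathbf{a}^*+\tfrac12\mathbf{1},$$ and consequently $\mathbf{a}^*=\lfloor \mathbf{h}x\rceil$ (componentwise rounding to the nearest integer).
   Context: $\|\cdot\|$ is the Euclidean norm, $\mathbf{I}$ the $n\times n$ identity, $\mathbf{1}$ the all-ones vector, $\mathbf{u}_i$ the $i$-th standard unit vector of $\mathbb{R}^n$. Vector inequalities are elementwise. The matrix $\mathbf{G}$ is positive definite (its eigenvalues are $1$ and $1+P\|\mathbf{h}\|^2$), so a minimizer exists. *)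

(* Defs.v *)
(* classical reals. Vectors of R^n / Z^n are functions nat -> R / nat -> Z,
   only the indices 0..n-1 being relevant. *)
From Stdlib Require Import Reals List.
Import ListNotations.
Open Scope R_scope.

Definition vsum (n : nat) (f : nat -> R) : R :=
  fold_right Rplus 0 (map f (seq 0 n)).

Definition normsq (n : nat) (h : nat -> R) : R := vsum n (fun i => h i ^ 2).

Definition kdelta (i j : nat) : R := if Nat.eqb i j then 1 else 0.

Definition Gmat (n : nat) (P : R) (h : nat -> R) (i j : nat) : R :=
  (1 + P * normsq n h) * kdelta i j - P * h i * h j.

Definition qf (n : nat) (P : R) (h : nat -> R) (a : nat -> Z) : R :=
  vsum n (fun i => vsum n (fun j => IZR (a i) * Gmat n P h i j * IZR (a j))).

Definition nonzero (n : nat) (a : nat -> Z) : Prop := exists i, (i < n)%nat /\ a i <> 0%Z.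

Definition is_minimizer (n : nat) (P : R) (h : nat -> R) (a : nat -> Z) : Prop :=
  nonzero n a /\ forall b : nat -> Z, nonzero n b -> qf n P h a <= qf n P h b.

Definition unitZ (i j : nat) : Z := if Nat.eqb i j then 1%Z else 0%Z.

Definition round (y : R) : Z := Int_part (y + / 2).

(* Main.v *)
Require Import Defs.
From Stdlib Require Import Reals Lra Lia Psatz ZArith Arith List Classical.
Import ListNotations.
Open Scope R_scope.

Lemma fold_c (l : list R) (c : R) :
  fold_right Rplus c l = fold_right Rplus 0 l + c.
Proof. induction l; simpl; [lra | rewrite IHl; lra]. Qed.

Lemma vsum_0 f : vsum 0 f = 0.
Proof. reflexivity. Qed.

Lemma vsum_S n f : vsum (S n) f = vsum n f + f n.
Proof.
  unfold vsum. rewrite seq_S, map_app, fold_right_app. simpl.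
  rewrite fold_c. lra.
Qed.

Lemma vsum_ext n f g : (forall i, (i < n)%nat -> f i = g i) -> vsum n f = vsum n g.
Proof.
  induction n; intros H; [reflexivity|].
  rewrite !vsum_S. rewrite IHn by (intros; apply H; lia). rewrite H by lia. reflexivity.
Qed.

Lemma vsum_plus n f g : vsum n (fun i => f i + g i) = vsum n f + vsum n g.
Proof. induction n; [unfold vsum; simpl; lra|]. rewrite !vsum_S, IHn. lra. Qed.

Lemma vsum_scal n c f : vsum n (fun i => c * f i) = c * vsum n f.
Proof. induction n; [unfold vsum; simpl; lra|]. rewrite !vsum_S, IHn. lra. Qed.

Lemma vsum_zero n : vsum n (fun _ => 0) = 0.
Proof. induction n; [reflexivity|]. rewrite vsum_S, IHn. lra. Qed.

Lemma vsum_kdelta n f i : (i < n)%nat -> vsum n (fun j => f j * kdelta i j) = f i.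
Proof.
  induction n; intros H; [lia|]. rewrite vsum_S.
  destruct (Nat.eq_dec i n) as [->|Hne].
  - rewrite (vsum_ext n _ (fun _ => 0)).
    + rewrite vsum_zero. unfold kdelta. rewrite Nat.eqb_refl. lra.
    + intros j Hj. unfold kdelta. destruct (Nat.eqb_spec n j); [lia|lra].
  - rewrite IHn by lia. unfold kdelta. destruct (Nat.eqb_spec i n); [lia|lra].
Qed.

Lemma vsum_sq_nonneg n f : 0 <= vsum n (fun i => f i ^ 2).
Proof. induction n; [unfold vsum; simpl; lra|]. rewrite vsum_S. nra. Qed.

Lemma qf_eq n P h a :
  qf n P h a = (1 + P * normsq n h) * vsum n (fun i => IZR (a i) ^ 2)
     - P * (vsum n (fun i => h i * IZR (a i))) ^ 2.
Proof.
  set (A := 1 + P * normsq n h).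
  set (S := vsum n (fun i => h i * IZR (a i))).
  unfold qf.
  rewrite (vsum_ext n _ (fun i => A * (IZR (a i) ^ 2) + (- P * S) * (h i * IZR (a i)))).
  - rewrite vsum_plus, vsum_scal, vsum_scal. fold S. ring.
  - intros i Hi.
    rewrite (vsum_ext n _ (fun j => (A * IZR (a i) * IZR (a j)) * kdelta i j
              + (- P * h i * IZR (a i)) * (h j * IZR (a j)))).
    + rewrite vsum_plus, vsum_scal, vsum_kdelta by exact Hi. fold S. ring.
    + intros j Hj. unfold Gmat. fold A. ring.
Qed.

Lemma IZR_unit i j : IZR (unitZ i j) = kdelta i j.
Proof. unfold unitZ, kdelta. destruct (Nat.eqb i j); reflexivity. Qed.

Lemma kdelta_sq i j : kdelta i j * kdelta i j = kdelta i j.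
Proof. unfold kdelta. destruct (Nat.eqb i j); ring. Qed.

Lemma IZR_ge_half z : -/2 <= IZR z -> (0 <= z)%Z.
Proof.
  intros H. destruct (Z_lt_le_dec z 0) as [Hz|Hz]; [|exact Hz].
  assert (IZR z <= -1) by (replace (-1) with (IZR (-1)) by reflexivity; apply IZR_le; lia).
  lra.
Qed.

Theorem theorem1 (n : nat) (P : R) (h : nat -> R) (astar : nat -> Z)
  (Hn : (1 <= n)%nat) (HP : 0 <= P)
  (Hmin : is_minimizer n P h astar) :
  (exists i, (i < n)%nat /\
     ((forall j, (j < n)%nat -> astar j = unitZ i j) \/
      (forall j, (j < n)%nat -> astar j = (- unitZ i j)%Z)))
  \/
  (exists x : R,
     (forall i, (i < n)%nat ->
        IZR (astar i) - / 2 < h i * x /\ h i * x < IZR (astar i) + / 2) /\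
     (forall i, (i < n)%nat -> astar i = round (h i * x))).
Proof.
  destruct Hmin as [Hnz Hle].
  set (A := 1 + P * normsq n h).
  assert (HA : 1 <= A) by (unfold A, normsq; pose proof (vsum_sq_nonneg n h); nra).
  set (Q := vsum n (fun i => IZR (astar i) ^ 2)).
  set (S := vsum n (fun i => h i * IZR (astar i))).
  set (x := P * S / A).
  assert (Hpert : forall i (s : Z), (i < n)%nat -> (s = 1 \/ s = -1)%Z ->
            Defs.nonzero n (fun j => (astar j + s * unitZ i j)%Z) ->
            IZR s * (IZR (astar i) - h i * x) > - / 2).
  { intros i s Hi Hs Hb. specialize (Hle _ Hb).
    rewrite !qf_eq in Hle. fold A in Hle. fold Q S in Hle.
    rewrite (vsum_ext n (fun i0 => IZR (astar i0 + s * unitZ i i0) ^ 2)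
      (fun j => IZR (astar j) ^ 2 + (2 * IZR s * IZR (astar j)) * kdelta i j
                 + (IZR s ^ 2) * kdelta i j)) in Hle.
    2:{ intros j Hj. rewrite plus_IZR, mult_IZR, IZR_unit.
        pose proof (kdelta_sq i j). nra. }
    rewrite (vsum_ext n (fun i0 => h i0 * IZR (astar i0 + s * unitZ i i0))
      (fun j => h j * IZR (astar j) + (IZR s * h j) * kdelta i j)) in Hle.
    2:{ intros j Hj. rewrite plus_IZR, mult_IZR, IZR_unit. ring. }
    rewrite !vsum_plus, !vsum_kdelta in Hle by exact Hi.
    fold Q S in Hle.
    assert (Hy : A * (h i * x) = P * h i * S) by (unfold x; field; lra).
    assert (Hkey : 0 <= A * (2 * IZR s * IZR (astar i) + 1)
                        - P * (2 * IZR s * S * h i + h i ^ 2)) by (destruct Hs as [-> | ->]; simpl IZR in *; lra).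
    destruct (Req_dec (P * h i ^ 2) 0) as [H0|H0].
    - assert (HPh : P * h i = 0).
      { destruct (Req_dec P 0) as [->|HP0]; [ring|].
        assert (Hh2 : h i ^ 2 = 0) by (destruct (Rmult_integral _ _ H0); [contradiction|assumption]).
        assert (Hh : h i = 0) by nra. rewrite Hh. ring. }
      assert (Hhx : h i * x = 0) by (unfold x; replace (h i * (P * S / A)) with ((P * h i) * S / A) by (field; lra); rewrite HPh; field; lra).
      rewrite Hhx.
      assert (Hsa : -/2 <= IZR (s * astar i)).
      { rewrite mult_IZR.
        assert (HPz : P * (2 * IZR s * S * h i + h i ^ 2) = 0) by (replace (P * (2 * IZR s * S * h i + h i ^ 2)) with ((P * h i) * (2 * IZR s * S + h i)) by ring; rewrite HPh; ring).
        assert (0 <= A * (2 * IZR s * IZR (astar i) + 1)) by lra.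
        assert (0 <= 2 * IZR s * IZR (astar i) + 1).
        { destruct (Rle_dec 0 (2 * IZR s * IZR (astar i) + 1)); [assumption|nra]. }
        lra. }
      apply IZR_ge_half in Hsa. apply IZR_le in Hsa. rewrite mult_IZR in Hsa. lra.
    - assert (HPh2 : 0 < P * h i ^ 2) by (pose proof (pow2_ge_0 (h i)); nra).
      assert (Hlin : A * (IZR s * (IZR (astar i) - h i * x)) > - A / 2).
      { replace (A * (IZR s * (IZR (astar i) - h i * x))) with
          (IZR s * (A * IZR (astar i)) - IZR s * (A * (h i * x))) by ring.
        rewrite Hy. nra. }
      apply (Rmult_lt_reg_l A); [lra|]. lra. }
  destruct (classic (exists i s, (i < n)%nat /\ (s = 1 \/ s = -1)%Z /\
               forall j, (j < n)%nat -> (astar j + s * unitZ i j)%Z = 0%Z))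
    as [[i [s [Hi [Hs Hz]]]] | Hno].
  - left. exists i. split; [exact Hi|].
    destruct Hs as [-> | ->].
    + right. intros j Hj. specialize (Hz j Hj). lia.
    + left. intros j Hj. specialize (Hz j Hj). lia.
  - assert (Hnzb : forall i s, (i < n)%nat -> (s = 1 \/ s = -1)%Z ->
              Defs.nonzero n (fun j => (astar j + s * unitZ i j)%Z)).
    { intros i s Hi Hs. apply NNPP. intros Hn0. apply Hno. exists i, s.
      repeat split; try assumption. intros j Hj.
      destruct (Z.eq_dec (astar j + s * unitZ i j) 0) as [e|e]; [exact e|].
      exfalso. apply Hn0. exists j. split; assumption. }
    assert (Hb : forall i, (i < n)%nat ->
        IZR (astar i) - / 2 < h i * x /\ h i * x < IZR (astar i) + / 2).
    { intros i Hi.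
      pose proof (Hpert i 1%Z Hi (or_introl eq_refl) (Hnzb i 1%Z Hi (or_introl eq_refl))) as H1.
      pose proof (Hpert i (-1)%Z Hi (or_intror eq_refl) (Hnzb i (-1)%Z Hi (or_intror eq_refl))) as H2.
      simpl IZR in H1, H2. lra. }
    right. exists x. split; [exact Hb|].
    intros i Hi. specialize (Hb i Hi). unfold round.
    apply Int_part_spec. lra.
Qed.
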